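(* Let $q$ be a prime power, $k\ge 1$, $d\ge1$, and write $d=\sigma q^{k-1}-\sum_{i=0}^{k-2}\varepsilon_i q^i$ with $\sigma$ an integer and $0\le \varepsilon_i\le q-1$. Let $C$ be a linear $[n,k,d]_q$ code with $n=g_q(k,d)$. Then for every $1\le r\le k$, \[ d_r(C)=v_r\Bigl(\sigma q^{k-r}-\sum_{i=r}^{k-1}\varepsilon_{i-1}q^{i-r}\Bigr)-\sum_{i=1}^{r-1}\varepsilon_{i-1}v_i, \] and $C$ attains the Griesmer bound for the $r$th generalized Hamming weight, i.e. $n=g_q^{(r)}(k,d_r(C))$.
   Context: $v_j=(q^j-1)/(q-1)$. An $[n,k,d]_q$ code is a $k$-dimensional subspace of $\mathbb{F}_q^n$ with minimum Hamming distance $d$. $g_q(k,d)=\sum_{i=0}^{k-1}\lceil d/q^i\rceil$ (the Griesmer bound). For a subcode $C'\le C$, its support is the set of coordinates in which some codeword of $C'$ is nonzero; the $r$th generalized Hamming weight $d_r(C)$ is the minimum support size of an $r$-dimensional subcode of $C$. For $1\le r\le k$, $g_q^{(r)}(k,d)=d+\sum_{i=1}^{k-r}\lceil d/(q^iv_r)\rceil$. *)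

(* Defs.v *)
From HB Require Import structures.
From mathcomp Require Import all_boot all_order all_algebra all_field.
Set Implicit Arguments. Unset Strict Implicit. Unset Printing Implicit Defensive.
Import Order.TTheory GRing.Theory Num.Theory.

Local Open Scope ring_scope.

(* Linear codes of length n over a finite field F are subspaces
   C : {vspace 'rV[F]_n}; q = #|F|. *)

Definition wt (F : finFieldType) (n : nat) (v : 'rV[F]_n) : nat :=
  #|[set j : 'I_n | v 0 j != 0]|.

Definition supp (F : finFieldType) (n : nat) (D : {vspace 'rV[F]_n}) : {set 'I_n} :=
  [set j : 'I_n | [exists v : 'rV[F]_n, (v \in D) && (v 0 j != 0)]].

Definition is_min_dist (F : finFieldType) (n : nat) (C : {vspace 'rV[F]_n}) (d : nat) : Prop :=
  (exists2 c : 'rV[F]_n, (c \in C) && (c != 0) & wt c = d) /\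
  (forall c : 'rV[F]_n, c \in C -> c != 0 -> (d <= wt c)%N).

Definition is_ghw (F : finFieldType) (n : nat) (C : {vspace 'rV[F]_n}) (r w : nat) : Prop :=
  (exists D : {vspace 'rV[F]_n}, [/\ (D <= C)%VS, \dim D = r & #|supp D| = w]) /\
  (forall D : {vspace 'rV[F]_n}, (D <= C)%VS -> \dim D = r -> (w <= #|supp D|)%N).

Definition vq (q j : nat) : nat := ((q ^ j - 1) %/ (q - 1))%N.

Definition ceil_div (a b : nat) : nat := ((a + b - 1) %/ b)%N.

Definition griesmer (q k d : nat) : nat := (\sum_(i < k) ceil_div d (q ^ i))%N.

Definition griesmer_r (q k r d : nat) : nat :=
  (d + \sum_(1 <= i < (k - r).+1) ceil_div d (q ^ i * vq q r))%N.

(* Main.v *)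
Require Import Defs.
From HB Require Import structures.
From mathcomp Require Import all_boot all_order all_algebra all_field.
From mathcomp Require Import zify ring.
Import Order.TTheory GRing.Theory Num.Theory.
Local Open Scope ring_scope.

Local Close Scope ring_scope.

Lemma eq_from_le (m n : nat) : (forall e, (m <= e) = (n <= e))%N -> m = n.
Proof. by move=> H; apply/eqP; rewrite eqn_leq -H leqnn H leqnn. Qed.

Lemma ceil_leP a b e : (0 < b)%N -> (ceil_div a b <= e)%N = (a <= e * b)%N.
Proof.
move=> b0; rewrite /ceil_div -ltnS ltn_divLR // mulSn.
apply/idP/idP => H; nia.
Qed.

Lemma ceil_div1 a : ceil_div a 1 = a.
Proof. by rewrite /ceil_div addnK divn1. Qed.

Lemma ceil_ceil x a b : (0 < a)%N -> (0 < b)%N ->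
  ceil_div (ceil_div x a) b = ceil_div x (a * b).
Proof.
move=> a0 b0; apply: eq_from_le => e.
rewrite ceil_leP // ceil_leP // ceil_leP ?muln_gt0 ?a0 ?b0 //.
by rewrite mulnAC mulnA.
Qed.

Lemma ceil_mono a b m : (a <= b)%N -> (ceil_div a m <= ceil_div b m)%N.
Proof. by move=> ab; rewrite /ceil_div leq_div2r // leq_sub2r // leq_add2r. Qed.

Lemma G_S q m x : (0 < q)%N ->
  griesmer q m.+1 x = (x + griesmer q m (ceil_div x q))%N.
Proof.
move=> q0; rewrite /griesmer big_ord_recl /= expn0 ceil_div1; congr (_ + _)%N.
apply: eq_bigr => i _; rewrite /bump /= add1n expnS ceil_ceil //.
by rewrite expn_gt0 q0.
Qed.

Lemma G_mono q m x y : (x <= y)%N -> (griesmer q m x <= griesmer q m y)%N.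
Proof. by move=> xy; apply: leq_sum => i _; apply: ceil_mono. Qed.

Lemma G_strict q m x y : (0 < q)%N -> (0 < m)%N -> (x < y)%N ->
  (griesmer q m x < griesmer q m y)%N.
Proof.
move=> q0; case: m => // m _ xy; rewrite !G_S //.
have := G_mono q m _ _ (@ceil_mono _ _ q (ltnW xy)); lia.
Qed.

Lemma G_ge q m x : (0 < m)%N -> (x <= griesmer q m x)%N.
Proof.
case: m => // m _; rewrite /griesmer big_ord_recl /= expn0 ceil_div1.
exact: leq_addr.
Qed.

Lemma vqE q j : (1 < q)%N -> vq q j = (\sum_(i < j) q ^ i)%N.
Proof.
move=> q1; rewrite /vq subn1 predn_exp subn1 mulKn //; lia.
Qed.

Lemma vq0 q : vq q 0 = 0%N.
Proof. by rewrite /vq expn0 subnn div0n. Qed.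

Lemma vq_S q j : (1 < q)%N -> vq q j.+1 = (q * vq q j + 1)%N.
Proof.
move=> q1; rewrite !vqE // big_ord_recl expn0 big_distrr /= addnC.
by congr (_ + _)%N; apply: eq_bigr => i _; rewrite /bump /= add1n expnS.
Qed.

Lemma G_upper q d A r : (1 < q)%N -> forall i,
  (d <= A * q ^ (r + i))%N -> (griesmer q r d <= A * q ^ i.+1 * vq q r)%N.
Proof.
move=> q1; elim: r => [|r IH] i H.
  by rewrite /griesmer big_ord0.
rewrite /griesmer big_ord_recr /= -/(griesmer q r d).
have h1 := IH i.+1; rewrite -addSnnS in h1; have {h1}h1 := h1 H.
have h2 : (ceil_div d (q ^ r) <= A * q ^ i.+1)%N.
  by rewrite ceil_leP ?expn_gt0 ?(ltnW q1) // -mulnA -expnD addnC -addSnnS.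
rewrite vq_S // expnS in h1 *.
set P := q ^ i in h1 h2 *; nia.
Qed.

Lemma G_lower q d B r : (1 < q)%N -> forall i,
  (B * q ^ (r + i) < d)%N -> (B * q ^ i.+1 * vq q r + r <= griesmer q r d)%N.
Proof.
move=> q1; elim: r => [|r IH] i H.
  by rewrite /griesmer big_ord0 vq0 muln0.
rewrite /griesmer big_ord_recr /= -/(griesmer q r d).
have h1 := IH i.+1; rewrite -addSnnS in h1; have {h1}h1 := h1 H.
have h2 : (B * q ^ i.+1 < ceil_div d (q ^ r))%N.
  by rewrite ltnNge ceil_leP ?expn_gt0 ?(ltnW q1) // -mulnA -expnD addnC -addSnnS -ltnNge.
rewrite vq_S // expnS in h1 *.
set P := q ^ i in h1 h2 *; nia.
Qed.

Lemma term_eq q d r i : (1 < q)%N -> (0 < d)%N -> (0 < r)%N ->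
  ceil_div (griesmer q r d) (q ^ i.+1 * vq q r) = ceil_div d (q ^ (r + i)).
Proof.
move=> q1 d0 r0.
have qp : forall j, (0 < q ^ j)%N by move=> j; rewrite expn_gt0 ltnW.
have vp : (0 < vq q r)%N by case: r r0 => // r _; rewrite vq_S //; lia.
set A := ceil_div d (q ^ (r + i)).
have hA : (d <= A * q ^ (r + i))%N by rewrite -ceil_leP.
have A0 : (0 < A)%N by rewrite lt0n; apply/negP => /eqP A0; move: hA; rewrite A0; lia.
have hB : ((A - 1) * q ^ (r + i) < d)%N.
  by rewrite ltnNge -ceil_leP // -/A; lia.
have U := G_upper q d A r q1 i hA.
have L := G_lower q d (A - 1) r q1 i hB.
apply: eq_from_le => e; rewrite ceil_leP ?muln_gt0 ?qp //.
apply/idP/idP => H.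
- rewrite leqNgt; apply/negP => eA.
  rewrite -mulnA in L.
  have : (e * (q ^ i.+1 * vq q r) <= (A - 1) * (q ^ i.+1 * vq q r))%N.
    by apply: leq_mul => //; lia.
  lia.
- apply: (leq_trans U); rewrite -mulnA leq_mul2r; by apply/orP; right.
Qed.

Local Open Scope ring_scope.

Definition Pf (q k : nat) (sigma : int) (eps : nat -> nat) (r : nat) : int :=
  sigma * (q ^ (k - r))%N%:Z - \sum_(r <= i < k) (eps i.-1 * q ^ (i - r))%N%:Z.

Definition Lz (q : nat) (eps : nat -> nat) (j : nat) : int :=
  \sum_(0 <= i < j) (eps i * q ^ i)%N%:Z.

Definition RHSf q k sigma eps r : int :=
  (vq q r)%:Z * Pf q k sigma eps r - \sum_(1 <= i < r) (eps i.-1 * vq q i)%N%:Z.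

Lemma P_step q k sigma eps r : (0 < r)%N -> (r < k)%N ->
  Pf q k sigma eps r = q%:Z * Pf q k sigma eps r.+1 - (eps r.-1)%:Z.
Proof.
move=> r0 rk; rewrite /Pf big_ltn // subnn expn0 muln1.
have E : \sum_(r.+1 <= i < k) (eps i.-1 * q ^ (i - r))%N%:Z =
    q%:Z * \sum_(r.+1 <= i < k) (eps i.-1 * q ^ (i - r.+1))%N%:Z.
  rewrite mulr_sumr big_nat_cond [RHS in _ = RHS]big_nat_cond.
  apply: eq_bigr => i /andP[/andP[hi _] _].
  have -> : (i - r = (i - r.+1).+1)%N by lia.
  rewrite expnS !PoszM; ring.
have -> : (k - r = (k - r.+1).+1)%N by lia.
rewrite E expnS !PoszM; ring.
Qed.

Lemma LzE q eps j : Lz q eps j = (\sum_(0 <= i < j) (eps i * q ^ i))%N%:Z.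
Proof. by rewrite /Lz (big_morph Posz PoszD (erefl 0%:Z)). Qed.

Lemma L_bound q k eps j : (1 < q)%N ->
  (forall i, (i < k.-1)%N -> (eps i <= q - 1)%N) ->
  (j < k)%N -> (\sum_(0 <= i < j) (eps i * q ^ i) < q ^ j)%N.
Proof.
move=> q1 he; elim: j => [|j IH] jk; first by rewrite big_geq.
rewrite big_nat_recr //= expnS.
have := IH (ltnW jk); have := he j ltac:(lia).
set Q := (q ^ j)%N; set L := (\sum_(0 <= i < j) _)%N; nia.
Qed.

Lemma digit q k sigma eps d : (0 < k)%N ->
  d%:Z = sigma * (q ^ (k - 1))%N%:Z - \sum_(0 <= i < k.-1) (eps i * q ^ i)%N%:Z ->
  forall t r, (r + t = k)%N -> (0 < r)%N ->
  d%:Z = (q ^ r.-1)%N%:Z * Pf q k sigma eps r - Lz q eps r.-1.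
Proof.
move=> k0 hd; elim=> [|t IH] r rt r0.
  rewrite addn0 in rt; subst r.
  rewrite hd /Pf /Lz subnn expn0 (@big_geq _ _ _ k k) // subr0 subn1; ring.
have := IH r.+1 ltac:(by rewrite addSnnS) isT.
rewrite (P_step q k sigma eps r r0); last by lia.
case: r r0 rt => // r _ rt /= ->.
rewrite /Lz big_nat_recr //= expnS !PoszM; ring.
Qed.

Lemma c_eq q k sigma eps d : (1 < q)%N -> (0 < k)%N -> (0 < d)%N ->
  (forall i, (i < k.-1)%N -> (eps i <= q - 1)%N) ->
  d%:Z = sigma * (q ^ (k - 1))%N%:Z - \sum_(0 <= i < k.-1) (eps i * q ^ i)%N%:Z ->
  forall r, (0 < r)%N -> (r <= k)%N ->
  (ceil_div d (q ^ r.-1))%:Z = Pf q k sigma eps r.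
Proof.
move=> q1 k0 d0 he hd r r0 rk.
have := digit q k sigma eps d k0 hd (k - r)%N r ltac:(lia) r0.
have := L_bound q k eps r.-1 q1 he ltac:(lia).
rewrite LzE.
set L := (\sum_(0 <= i < r.-1) _)%N; set Q := (q ^ r.-1)%N.
have Q0 : (0 < Q)%N by rewrite expn_gt0 ltnW.
case: (Pf q k sigma eps r) => a hL hdd.
- rewrite -PoszM in hdd.
  have hn : (d + L = Q * a)%N by lia.
  congr Posz; apply: eq_from_le => e; rewrite ceil_leP //.
  apply/idP/idP => H; nia.
- rewrite NegzE in hdd; exfalso; nia.
Qed.

Lemma RHS_G q k sigma eps d : (1 < q)%N -> (0 < k)%N -> (0 < d)%N ->
  (forall i, (i < k.-1)%N -> (eps i <= q - 1)%N) ->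
  d%:Z = sigma * (q ^ (k - 1))%N%:Z - \sum_(0 <= i < k.-1) (eps i * q ^ i)%N%:Z ->
  forall r, (r <= k)%N -> (griesmer q r d)%:Z = RHSf q k sigma eps r.
Proof.
move=> q1 k0 d0 he hd; elim=> [|r IH] rk.
  by rewrite /griesmer big_ord0 /RHSf vq0 mul0r big_geq.
rewrite /griesmer big_ord_recr /= -/(griesmer q r d) PoszD.
have := c_eq q k sigma eps d q1 k0 d0 he hd r.+1 isT rk; rewrite /= => ->.
case: r IH rk => [|r] IH rk.
  rewrite /griesmer big_ord0 /RHSf (vq_S q 0) // vq0 big_geq //; ring.
rewrite IH; last by lia.
rewrite /RHSf (P_step q k sigma eps r.+1) // (@big_nat_recr _ _ _ r.+1 1) //= (vq_S q r.+1) //.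
rewrite !PoszD !PoszM; ring.
Qed.

Lemma griesmer_split q k r d : (1 < q)%N -> (0 < d)%N -> (0 < r)%N -> (r <= k)%N ->
  griesmer q k d = griesmer_r q k r (griesmer q r d).
Proof.
move=> q1 d0 r0 rk.
have E m : (\sum_(i < m) ceil_div d (q ^ i) = \sum_(0 <= i < m) ceil_div d (q ^ i))%N.
  by rewrite big_mkord.
rewrite /griesmer_r big_add1 /= /griesmer !E.
rewrite (@big_cat_nat _ _ _ r 0 k) //=; congr (_ + _)%N.
rewrite -{1}(add0n r) big_addn; apply: eq_bigr => i _.
by rewrite -(E r) -/(griesmer q r d) term_eq // addnC.
Qed.

Set Implicit Arguments. Unset Strict Implicit. Unset Printing Implicit Defensive.

Definition suppv (F : finFieldType) (n : nat) (v : 'rV[F]_n) : {set 'I_n} :=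
  [set j | v 0 j != 0].

Definition resm (F : finFieldType) (n : nat) (S : {set 'I_n}) : 'M[F]_n :=
  diag_mx (\row_j (if j \in S then 0 else 1)).

Definition res (F : finFieldType) (n : nat) (S : {set 'I_n}) :
  'Hom('rV[F]_n, 'rV[F]_n) := linfun (mulmxr (resm F S)).

Lemma resE (F : finFieldType) (n : nat) (S : {set 'I_n}) v j :
  (res F S v) 0 j = if j \in S then 0 else v 0 j.
Proof.
rewrite lfunE /= /resm mul_mx_diag !mxE; case: ifP => _; by rewrite ?mulr0 ?mulr1.
Qed.

Section Codes.
End Codes.

Lemma card_sum (T : finType) (P : pred T) :
  #|[set x | P x]| = (\sum_x (P x : nat))%N.
Proof.
rewrite -sum1_card big_mkcond /=; apply: eq_bigr => x _; rewrite inE.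
by case: (P x).
Qed.

Lemma row_neq0 (F : finFieldType) (n : nat) (v : 'rV[F]_n) :
  v != 0 -> exists j, v 0 j != 0.
Proof.
move=> nz; case: (pickP (fun j => v 0 j != 0)) => [j hj|h]; first by exists j.
case/eqP: nz; apply/rowP => j; rewrite mxE; move: (h j) => /= /negbFE /eqP //.
Qed.

Lemma suppP (F : finFieldType) (n : nat) (D : {vspace 'rV[F]_n}) j :
  reflect (exists2 v, v \in D & v 0 j != 0) (j \in supp D).
Proof.
rewrite inE; apply: (iffP existsP) => [[v /andP[h1 h2]]|[v h1 h2]].
  by exists v.
by exists v; rewrite h1 h2.
Qed.

Lemma supp_mono (F : finFieldType) (n : nat) (D1 D2 : {vspace 'rV[F]_n}) :
  (D1 <= D2)%VS -> supp D1 \subset supp D2.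
Proof.
move=> H; apply/subsetP => j /suppP [v hv hj]; apply/suppP; exists v => //.
exact: (subvP H).
Qed.

Lemma suppv_sub (F : finFieldType) (n : nat) (D : {vspace 'rV[F]_n}) v :
  v \in D -> suppv v \subset supp D.
Proof. by move=> hv; apply/subsetP => j; rewrite inE => hj; apply/suppP; exists v. Qed.

Lemma supp0 (F : finFieldType) (n : nat) : supp (0%VS : {vspace 'rV[F]_n}) = set0.
Proof.
apply/setP => j; rewrite in_set0; apply/negP => /suppP [v].
by rewrite memv0 => /eqP ->; rewrite mxE eqxx.
Qed.

Lemma shrink (F : finFieldType) (n : nat) (D : {vspace 'rV[F]_n}) m :
  (m <= \dim D)%N -> exists D0 : {vspace 'rV[F]_n}, (D0 <= D)%VS /\ \dim D0 = m.
Proof.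
move=> mD; exists <<take m (vbasis D)>>%VS; split.
  by apply/span_subvP => x hx; apply: vbasis_mem; exact: mem_take hx.
have fr : free (take m (vbasis D)).
  have := basis_free (vbasisP D).
  by rewrite -{1}(cat_take_drop m (vbasis D)) => /catl_free.
rewrite (eqP fr) size_take size_tuple; case: ltnP => //; lia.
Qed.

Lemma exists_minwt (F : finFieldType) (n : nat) (C : {vspace 'rV[F]_n}) :
  (0 < \dim C)%N -> exists c, [/\ c \in C, c != 0 &
     forall x, x \in C -> x != 0 -> (wt c <= wt x)%N].
Proof.
move=> hC.
have c0nz : vpick C != 0 by rewrite vpick0 -dimv_eq0 -lt0n.
have P0 : (fun x => (x \in C) && (x != 0)) (vpick C) by rewrite /= memv_pick c0nz.
case: (@arg_minnP _ (vpick C) (fun x => (x \in C) && (x != 0)) (@wt F n) P0).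
move=> c /andP[cC cnz] hmin; exists c; split => // x xC xnz.
by apply: hmin; rewrite xC xnz.
Qed.

Lemma res_in (F : finFieldType) (n : nat) (S : {set 'I_n}) x j :
  j \in S -> (res F S x) 0 j = 0.
Proof. by move=> h; rewrite resE h. Qed.

Lemma res_out (F : finFieldType) (n : nat) (S : {set 'I_n}) x j :
  j \notin S -> (res F S x) 0 j = x 0 j.
Proof. by move=> h; rewrite resE (negbTE h). Qed.

Lemma cout (F : finFieldType) (n : nat) (c : 'rV[F]_n) j :
  j \notin suppv c -> c 0 j = 0.
Proof. by rewrite inE negbK => /eqP. Qed.

Lemma res_c (F : finFieldType) (n : nat) (c : 'rV[F]_n) :
  res F (suppv c) c = 0.
Proof.
apply/rowP => j; rewrite mxE; case: (boolP (j \in suppv c)) => h.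
  by rewrite res_in.
by rewrite res_out // cout.
Qed.

Lemma R1 (F : finFieldType) (n : nat) (C : {vspace 'rV[F]_n}) c :
  c \in C -> c != 0 -> (forall x, x \in C -> x != 0 -> (wt c <= wt x)%N) ->
  \dim (res F (suppv c) @: C) = (\dim C).-1.
Proof.
move=> cC cnz hmin; set S := suppv c.
have H : (C :&: lker (res F S) <= <[c]>)%VS.
  apply/subvP => x; rewrite memv_cap memv_ker => /andP[xC /eqP rx].
  have xout j : j \notin S -> x 0 j = 0.
    by move=> hj; rewrite -(res_out x hj) rx mxE.
  case: (eqVneq x 0) => [->|xnz]; first exact: mem0v.
  have [j xj] := row_neq0 xnz.
  have jS : j \in S by apply: contraR xj => hj; rewrite xout.
  have cj : c 0 j != 0 by rewrite inE in jS.
  set y := x - (x 0 j / c 0 j) *: c.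
  have yC : y \in C by rewrite memvB // memvZ.
  have yj : y 0 j = 0 by rewrite !mxE divfK // subrr.
  have ysub : suppv y \proper S.
    apply/properP; split; last by exists j => //; rewrite inE yj eqxx.
    apply/subsetP => i; rewrite inE; apply: contraR => hi.
    by rewrite !mxE (xout i hi) (cout hi) mulr0 subr0.
  have y0 : y = 0.
    apply/eqP; apply: contraT => ynz.
    have := hmin y yC ynz; have := proper_card ysub; rewrite /wt /suppv /S /suppv.
    by move=> a b; move: (leq_ltn_trans b a); rewrite ltnn.
  move/eqP: y0; rewrite subr_eq0 => /eqP ->.
  by rewrite memvZ // memv_line.
have h1 := dimvS H; rewrite dim_vline cnz /= in h1.
have h2 : (<[c]> <= C :&: lker (res F S))%VS.
  by rewrite -memvE memv_cap cC memv_ker res_c eqxx.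
have h3 := dimvS h2; rewrite dim_vline cnz /= in h3.
have e : \dim (C :&: lker (res F S)) = 1%N by apply/eqP; rewrite eqn_leq h1 h3.
have := limg_ker_dim (res F S) C; rewrite e add1n; by move=> <-.
Qed.

Lemma count_line (F : finFieldType) (a b : F) : b != 0 ->
  (\sum_(l : F) ((a + l * b != 0)%R : nat) = #|F| - 1)%N.
Proof.
move=> bnz; rewrite -card_sum.
have -> : [set l | a + l * b != 0] = [set~ (- a / b)].
  apply/setP => l; rewrite !inE; congr negb.
  apply/eqP/eqP => [h|->]; last by rewrite !mulNr divfK // subrr.
  have hb : l * b = - a by apply/eqP; rewrite -addr_eq0 addrC h.
  by rewrite -hb mulfK.
by rewrite cardsC1 subn1.
Qed.

Lemma R2 (F : finFieldType) (n : nat) (C : {vspace 'rV[F]_n}) c :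
  c \in C -> c != 0 -> (forall x, x \in C -> x != 0 -> (wt c <= wt x)%N) ->
  forall y, y \in (res F (suppv c) @: C)%VS -> y != 0 -> (wt c <= #|F| * wt y)%N.
Proof.
move=> cC cnz hmin y /memv_imgP [x xC ->] ynz; set S := suppv c.
have hz l : (wt c <= wt (x + l *: c))%N.
  apply: hmin; first by rewrite memvD // memvZ.
  apply: contra ynz => /eqP h.
  by rewrite -[x](addrK (l *: c)) h sub0r linearN linearZ /= res_c scaler0 oppr0.
have e1 : (#|F| * wt c = \sum_(l : F) wt c)%N by rewrite sum_nat_const.
have h1 : (#|F| * wt c <= \sum_(l : F) wt (x + l *: c)%R)%N.
  by rewrite e1; apply: leq_sum => l _.
have e2 : (\sum_(l : F) wt (x + l *: c)%R =
   \sum_(j < n) \sum_(l : F) ((x 0 j + l * c 0 j != 0)%R : nat))%N.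
  rewrite exchange_big /=; apply: eq_bigr => l _; rewrite /wt card_sum.
  by apply: eq_bigr => j _; rewrite !mxE.
have h2 : (\sum_(j < n) \sum_(l : F) ((x 0 j + l * c 0 j != 0)%R : nat) <=
   \sum_(j < n) ((#|F| - 1) * ((c 0 j != 0)%R : nat) + #|F| * (((res F S x) 0 j != 0)%R : nat)))%N.
  apply: leq_sum => j _; case: (eqVneq (c 0 j) 0) => [cj|cj].
    have jS : j \notin S by rewrite inE cj eqxx.
    rewrite res_out // cj muln0 add0n.
    under eq_bigr do rewrite mulr0 addr0.
    by rewrite sum_nat_const cardT -cardT.
  have jS : j \in S by rewrite inE.
  by rewrite res_in // eqxx muln0 addn0 muln1 count_line.
have e3 : (\sum_(j < n) ((#|F| - 1) * ((c 0 j != 0)%R : nat) + #|F| * (((res F S x) 0 j != 0)%R : nat)) =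
   (#|F| - 1) * wt c + #|F| * wt (res F S x))%N.
  by rewrite big_split /= -!big_distrr /= /wt !card_sum.
have q1 := card_finNzRing_gt1 F.
move: h1 h2; rewrite e2 e3; set w := wt c; set t := wt _; set q := #|F|.
move=> h1 h2; rewrite mulnBl mul1n in h2.
have h4 : (w <= q * w)%N by apply: leq_pmull; apply: ltnW.
lia.
Qed.

Lemma R3 (F : finFieldType) (n : nat) (C : {vspace 'rV[F]_n}) c :
  c \in C -> #|supp C| = (wt c + #|supp (res F (suppv c) @: C)|)%N.
Proof.
move=> cC; set S := suppv c.
have e : supp (res F S @: C) = supp C :\: S.
  apply/setP => j; rewrite in_setD; apply/suppP/andP.
    case=> v /memv_imgP [x xC ->]; rewrite resE.
    case: ifP => [_|jS xj]; first by rewrite eqxx.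
    by split => //; apply/suppP; exists x.
  case=> jS /suppP [x xC xj]; exists (res F S x); first exact: memv_img.
  by rewrite res_out.
rewrite e -(cardsID S (supp C)); congr (_ + _)%N.
by rewrite (setIidPr (suppv_sub cC)).
Qed.

Lemma R4 (F : finFieldType) (n : nat) (C : {vspace 'rV[F]_n}) c
   (D' : {vspace 'rV[F]_n}) r :
  c \in C -> c != 0 -> (D' <= res F (suppv c) @: C)%VS -> \dim D' = r ->
  exists D : {vspace 'rV[F]_n},
    [/\ (D <= C)%VS, \dim D = r.+1 & (#|supp D| <= wt c + #|supp D'|)%N].
Proof.
move=> cC cnz hD' hr; set S := suppv c.
set D1 := (C :&: res F S @^-1: D')%VS.
have img : (D' <= res F S @: D1)%VS.
  apply/subvP => y yD'.
  case/memv_imgP: (subvP hD' y yD') => x xC yE; rewrite yE in yD' *.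
  by apply: memv_img; rewrite memv_cap xC -memv_preim.
have h2 : (<[c]> <= D1 :&: lker (res F S))%VS.
  by rewrite -memvE !memv_cap cC -memv_preim memv_ker res_c mem0v eqxx.
have h3 := dimvS h2; rewrite dim_vline cnz /= in h3.
have h4 := dimvS img; rewrite hr in h4.
have h5 := limg_ker_dim (res F S) D1.
have hD1 : (r.+1 <= \dim D1)%N.
  rewrite -h5; apply: leq_trans (leq_add h3 h4); by rewrite add1n.
have [D0 [D0D1 dD0]] := shrink hD1.
exists D0; split => //.
  by apply: subv_trans D0D1 _; apply: capvSl.
have s1 : supp D1 \subset S :|: supp D'.
  apply/subsetP => j /suppP [v]; rewrite memv_cap -memv_preim => /andP[vC vD'] vj.
  rewrite inE; case: (boolP (j \in S)) => //= jS; apply/suppP.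
  by exists (res F S v) => //; rewrite res_out.
apply: leq_trans (subset_leq_card (subset_trans (supp_mono D0D1) s1)) _.
by rewrite cardsU leq_subr.
Qed.

Lemma gr_bound (F : finFieldType) (n : nat) (k : nat) :
  forall (C : {vspace 'rV[F]_n}) d, \dim C = k ->
  (forall x, x \in C -> x != 0 -> (d <= wt x)%N) ->
  (griesmer #|F| k d <= #|supp C|)%N.
Proof.
have q1 := card_finNzRing_gt1 F.
elim: k => [|k IH] C d hk hd; first by rewrite /griesmer big_ord0.
have [c [cC cnz hmin]] := exists_minwt (C := C) ltac:(by rewrite hk).
have hdim := R1 cC cnz hmin; rewrite hk /= in hdim.
have hR : forall y, y \in (res F (suppv c) @: C)%VS -> y != 0 ->
    (ceil_div (wt c) #|F| <= wt y)%N.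
  by move=> y hy ynz; rewrite ceil_leP ?(ltnW q1) // mulnC; exact: (R2 cC cnz hmin hy ynz).
have := IH _ _ hdim hR; rewrite (R3 cC) => h.
have := G_mono #|F| k.+1 _ _ (hd c cC cnz); rewrite [X in (_ <= X)%N -> _]G_S ?(ltnW q1) //.
lia.
Qed.

Lemma gr_sub (F : finFieldType) (n : nat) (r : nat) :
  forall k (C : {vspace 'rV[F]_n}) d, \dim C = k -> (r <= k)%N ->
  (forall x, x \in C -> x != 0 -> (d <= wt x)%N) ->
  (#|supp C| <= griesmer #|F| k d)%N ->
  exists D : {vspace 'rV[F]_n},
    [/\ (D <= C)%VS, \dim D = r & (#|supp D| <= griesmer #|F| r d)%N].
Proof.
have q1 := card_finNzRing_gt1 F.
have q0 : (0 < #|F|)%N by apply: ltnW.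
elim: r => [|r IH] k C d hk rk hd hs.
  exists 0%VS; split; [exact: sub0v | exact: dimv0 | by rewrite supp0 cards0].
case: k hk rk hs => // k hk rk hs.
have [c [cC cnz hmin]] := exists_minwt (C := C) ltac:(by rewrite hk).
have dw := hd c cC cnz.
have wd : (wt c <= d)%N.
  rewrite leqNgt; apply/negP => lt.
  have := gr_bound hk hmin; have := G_strict #|F| k.+1 d (wt c) q0 isT lt; lia.
have hdim := R1 cC cnz hmin; rewrite hk /= in hdim.
have hR : forall y, y \in (res F (suppv c) @: C)%VS -> y != 0 ->
    (ceil_div d #|F| <= wt y)%N.
  move=> y hy ynz; rewrite ceil_leP // mulnC.
  have -> : d = wt c by apply/eqP; rewrite eqn_leq wd dw.
  exact: (R2 cC cnz hmin hy ynz).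
have hsR : (#|supp (res F (suppv c) @: C)| <= griesmer #|F| k (ceil_div d #|F|))%N.
  move: hs; rewrite (R3 cC) G_S //; lia.
have [D' [D'R dD' sD']] := IH k _ _ hdim rk hR hsR.
have [D [DC dD sD]] := R4 cC cnz D'R dD'.
exists D; split => //; rewrite G_S //; lia.
Qed.

Unset Implicit Arguments. Set Strict Implicit. Set Printing Implicit Defensive.

Theorem mainTheorem2 (F : finFieldType) (n k d : nat) (C : {vspace 'rV[F]_n})
    (sigma : int) (eps : nat -> nat) :
  (1 <= k)%N -> (1 <= d)%N ->
  (forall i, (i < k.-1)%N -> (eps i <= #|F| - 1)%N) ->
  d%:Z = sigma * (#|F| ^ (k - 1))%N%:Z
         - \sum_(0 <= i < k.-1) (eps i * #|F| ^ i)%N%:Z ->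
  \dim C = k -> is_min_dist C d ->
  n = griesmer #|F| k d ->
  forall r : nat, (1 <= r <= k)%N ->
  exists w : nat,
    [/\ is_ghw C r w,
        w%:Z = (vq #|F| r)%:Z *
                 (sigma * (#|F| ^ (k - r))%N%:Z
                  - \sum_(r <= i < k) (eps i.-1 * #|F| ^ (i - r))%N%:Z)
               - \sum_(1 <= i < r) (eps i.-1 * vq #|F| i)%N%:Z
      & n = griesmer_r #|F| k r w].
Proof.
move=> k1 d1 heps hd hdim [_ hmd] hn r /andP[r1 rk].
have q1 := card_finNzRing_gt1 F.
exists (griesmer #|F| r d); split.
- have hs : (#|supp C| <= griesmer #|F| k d)%N.
    by rewrite -hn; apply: leq_trans (max_card _) _; rewrite card_ord.
  have lowb : forall D : {vspace 'rV[F]_n}, (D <= C)%VS -> \dim D = r ->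
      (griesmer #|F| r d <= #|supp D|)%N.
    move=> D DC dD; apply: gr_bound dD _ => x xD xnz.
    exact: hmd x (subvP DC x xD) xnz.
  split => //.
  have [D [DC dD sD]] := gr_sub hdim rk hmd hs.
  exists D; split => //; apply/eqP; rewrite eqn_leq sD.
  exact: lowb.
- exact: (RHS_G #|F| k sigma eps d q1 k1 d1 heps hd r rk).
- by rewrite hn; apply: griesmer_split.
Qed.
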